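(* Consider coordination games in which every player has strategy set $\{1,2\}$, with solution set $\mathrm{NE}$ (pure Nash equilibria). (1) If $G$ is a cycle on $n\ge4$ nodes, then $ST(\mathrm{NE})\setminus\mathrm{NE}\neq\emptyset$; moreover, if $n$ is even, there is $s\in ST(\mathrm{NE})\setminus\mathrm{NE}$ with $\mathrm{sw}(s)=|E|-|N|\,(=0)$. (2) If $G$ is the complete graph on $n$ nodes, then $ST(\mathrm{NE})\setminus\mathrm{NE}\neq\emptyset$ if and only if $n$ is even. (3) If $G$ is a forest with at least one edge, then $ST(\mathrm{NE})\setminus\mathrm{NE}\neq\emptyset$.
   Context: The coordination game on a finite simple undirected graph $G=(N,E)$: players are nodes, each chooses $s_i\in\{1,2\}$, and $u_i(s)$ is the number of neighbours $j$ of $i$ with $s_j=s_i$; $\mathrm{sw}(s)=\sum_iu_i(s)$. For a solution set $D$, a transition is a profile $t$ such that for each $i$ there is $d\in D$ with $t_i=d_i$. $\mathrm{BR}_i(s_{-i})$ is the set of best responses of $i$. A stable transition is a transition $s$ such that for every $i$ with $s_i\notin\mathrm{BR}_i(s_{-i})$ there is $j\neq i$ with $s_j\notin\mathrm{BR}_j(s_{-j})$ and some $\hat s_j\in\mathrm{BR}_j(s_{-j})$ with $s_i\in\mathrm{BR}_i(\hat s_j,s_{-\{i,j\}})$; $ST(D)$ denotes the set of stable transitions. *)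

(* Defs.v *)
From mathcomp Require Import all_boot all_order all_algebra.
Set Implicit Arguments. Unset Strict Implicit. Unset Printing Implicit Defensive.

(* A strategy is a bool: true encodes strategy 1, false encodes strategy 2.
   A (pure) profile on a finite player set T is a function T -> bool. *)
Section Game.
Variables (T : finType) (e : rel T).

Definition upd (s : T -> bool) (i : T) (a : bool) : T -> bool :=
  fun j => if j == i then a else s j.

Definition util (s : T -> bool) (i : T) : nat :=
  #|[set j | e i j && (s j == s i)]|.

Definition sw (s : T -> bool) : nat := \sum_(i : T) util s i.

Definition nedges : nat := #|[set p : T * T | e p.1 p.2]| %/ 2.

Definition BR (s : T -> bool) (i : T) (a : bool) : Prop :=
  forall b : bool, util (upd s i b) i <= util (upd s i a) i.

Definition NE (s : T -> bool) : Prop := forall i, BR s i (s i).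

Definition transition (D : (T -> bool) -> Prop) (t : T -> bool) : Prop :=
  forall i, exists d, D d /\ t i = d i.

Definition stable_transition (D : (T -> bool) -> Prop) (s : T -> bool) : Prop :=
  transition D s /\
  forall i, ~ BR s i (s i) ->
    exists j, j != i /\ ~ BR s j (s j) /\
      exists shat : bool, BR s j shat /\ BR (upd s j shat) i (s i).

End Game.

Definition simple_graph (T : finType) (e : rel T) : Prop :=
  symmetric e /\ irreflexive e.

Definition forest (T : finType) (e : rel T) : Prop :=
  simple_graph e /\
  forall p : seq T, uniq p -> 3 <= size p -> ~~ cycle e p.

Definition cycle_graph (n : nat) : rel 'I_n :=
  fun i j => (val j == (val i).+1 %% n) || (val i == (val j).+1 %% n).

Definition complete_graph (n : nat) : rel 'I_n := fun i j => i != j.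

Arguments cycle_graph n : clear implicits.
Arguments complete_graph n : clear implicits.

(* Main.v *)
Require Import Defs.
From mathcomp Require Import all_boot all_order all_algebra.
From mathcomp Require Import zify.
Set Implicit Arguments. Unset Strict Implicit. Unset Printing Implicit Defensive.


Section Gen.
Variables (T : finType) (e : rel T).

Definition cnt (s : T -> bool) i b := #|[set j | e i j && (s j == b)]|.

Lemma util_upd s i b : ~~ e i i -> util e (upd s i b) i = cnt s i b.
Proof.
move=> Hii; rewrite /util /cnt; apply: eq_card => j; rewrite !inE /upd eqxx.
by case: (j =P i) => [->|//]; rewrite (negbTE Hii).
Qed.

Lemma BR_cnt s i a : ~~ e i i -> (BR e s i a <-> cnt s i (~~ a) <= cnt s i a).
Proof.
move=> Hii; rewrite /BR; split.
  by move=> H; have := H (~~ a); rewrite !util_upd.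
move=> H b; rewrite !util_upd //; case: (b =P a) => [->//|/eqP].
by case: a b H => [] [].
Qed.

Lemma cnt_upd s i j c b : j != i -> cnt (upd s j c) i b + (e i j && (s j == b)) = cnt s i b + (e i j && (c == b)).
Proof.
move=> Hji; rewrite /cnt (cardsD1 j [set k | _ && _]) (cardsD1 j [set k | e i k && (s k == b)]).
rewrite !inE /upd eqxx.
have -> : [set k | e i k && ((if k == j then c else s k) == b)] :\ j = [set k | e i k && (s k == b)] :\ j.
  by apply/setP => k; rewrite !inE; case: eqP.
lia.
Qed.

Lemma cnt_le_deg s i b : cnt s i b <= #|[set j | e i j]|.
Proof. by apply: subset_leq_card; apply/subsetP => j; rewrite !inE => /andP[]. Qed.

Lemma NE_const c : NE e (fun _ => c).
Proof.
move=> i b; rewrite /util; apply: subset_leq_card; apply/subsetP => j; rewrite !inE /upd !eqxx.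
by case/andP => -> _; case: (j == i) => /=; rewrite ?eqxx.
Qed.

Lemma transition_NE s : transition (NE e) s.
Proof. by move=> i; exists (fun _ => s i); split => //; apply: NE_const. Qed.

Lemma pair_ok s i j : ~~ e i i -> ~~ e j j -> e i j -> s j != s i -> ~ BR e s j (s j) ->
  cnt s i (~~ s i) <= (cnt s i (s i)).+2 ->
  exists j, j != i /\ ~ BR e s j (s j) /\
      exists shat : bool, BR e s j shat /\ BR e (upd s j shat) i (s i).
Proof.
move=> Hii Hjj Hij Hs Hj Hc.
have Hji : j != i by apply: contraNneq Hs => ->.
have Hsj : s j = ~~ s i by move: Hs; case: (s i); case: (s j).
exists j; split => //; split => //; exists (s i); split.
  rewrite BR_cnt //; move: Hj; rewrite BR_cnt // Hsj negbK; lia.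
rewrite BR_cnt //.
have H1 := cnt_upd s (s i) (~~ s i) Hji.
have H2 := cnt_upd s (s i) (s i) Hji.
move: H1 H2 Hc; rewrite Hij Hsj !eqxx /=.
by case: (s i) => /=; lia.
Qed.

End Gen.

Lemma exists_sub (T : finType) (A : {set T}) k : k <= #|A| -> exists B : {set T}, B \subset A /\ #|B| = k.
Proof.
elim: k => [|k IH] H; first by exists set0; rewrite sub0set cards0.
have [B [HBA HB]] := IH (ltnW H).
have : 0 < #|A :\: B| by rewrite cardsD (setIidPr HBA) HB subn_gt0.
case/card_gt0P => x; rewrite inE => /andP[HxB HxA].
exists (x |: B); split; first by rewrite subUset sub1set HxA HBA.
by rewrite cardsU1 HxB HB.
Qed.

Definition Cn (T : finType) (s : T -> bool) (b : bool) := #|[set j | s j == b]|.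

Lemma cnt_complete n s (i : 'I_n) b :
  cnt (complete_graph n) s i b + (s i == b) = Cn s b.
Proof.
rewrite /Cn (cardsD1 i [set j | s j == b]) inE addnC; congr (_ + _).
by apply: eq_card => j; rewrite !inE /complete_graph eq_sym.
Qed.

Lemma C_sum n (s : 'I_n -> bool) : Cn s true + Cn s false = n.
Proof.
rewrite /Cn.
rewrite -[n in RHS]card_ord -(cardsC [set j | s j == true]); congr (_ + _).
by apply: eq_card => j; rewrite !inE; case: (s j).
Qed.

Lemma complete_irr n (i : 'I_n) : ~~ complete_graph n i i.
Proof. by rewrite /complete_graph eqxx. Qed.

Lemma part2 n : 0 < n ->
     ((exists s : 'I_n -> bool,
        stable_transition (complete_graph n) (NE (complete_graph n)) s /\ ~ NE (complete_graph n) s)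
      <-> ~~ odd n).
Proof.
move=> Hn; have Hodd := odd_double_half n; rewrite -muln2 in Hodd.
split.
  case=> s [[_ Hst] HnNE]; apply/negP => Hn1; rewrite Hn1 in Hodd.
  have HC := C_sum s.
  case: (boolP [forall i, cnt (complete_graph n) s i (~~ s i) <= cnt (complete_graph n) s i (s i)]).
    move/forallP => H; apply: HnNE => i; rewrite BR_cnt ?complete_irr //; exact: H.
  case/forallPn => i Hi.
  have Hi' : ~ BR (complete_graph n) s i (s i) by rewrite BR_cnt ?complete_irr //; apply/negP.
  have [j [Hji [Hj [shat [Hsh Hup]]]]] := Hst i Hi'.
  move: Hj Hsh Hup; rewrite !BR_cnt ?complete_irr // => Hj Hsh Hup.
  have Hij : complete_graph n i j by rewrite /complete_graph eq_sym.
  have U1 := cnt_upd (complete_graph n) s shat (~~ s i) Hji.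
  have U2 := cnt_upd (complete_graph n) s shat (s i) Hji.
  move: U1 U2; rewrite Hij /=.
  have A1 := cnt_complete s i true; have A2 := cnt_complete s i false.
  have B1 := cnt_complete s j true; have B2 := cnt_complete s j false.
  move/negP: Hi => Hi; move: Hodd => /= Hodd; move: Hi Hj Hsh Hup A1 A2 B1 B2.
  case: (s i); case: (s j); case: shat => /=; lia.
move=> Hev; rewrite (negbTE Hev) /= in Hodd.
have HnA : n./2 <= #|[set: 'I_n]| by rewrite cardsT card_ord; lia.
have [A [_ HA]] := exists_sub HnA.
pose s := fun j : 'I_n => j \in A.
have HC := C_sum s.
have HCt : Cn s true = n./2 by rewrite /Cn -HA; apply: eq_card => j; rewrite !inE eqb_id.
have Hall : forall i, ~ BR (complete_graph n) s i (s i).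
  move=> i; rewrite BR_cnt ?complete_irr //.
  have A1 := cnt_complete s i true; have A2 := cnt_complete s i false.
  by move: A1 A2; case: (s i) => /=; lia.
exists s; split; last by move/(_ (Ordinal Hn)); apply: Hall.
split; first exact: transition_NE.
move=> i _.
have : exists j, s j != s i.
  case Hsi : (s i).
    have : 0 < Cn s false by lia.
    by rewrite /Cn; case/card_gt0P => j; rewrite inE => /eqP Hj; exists j; rewrite Hj.
  have : 0 < Cn s true by lia.
  by rewrite /Cn; case/card_gt0P => j; rewrite inE => /eqP Hj; exists j; rewrite Hj.
case=> j Hj.
apply: (pair_ok (j := j)) => //; try exact: complete_irr.
  by rewrite /complete_graph; apply: contraNneq Hj => ->.
have A1 := cnt_complete s i true; have A2 := cnt_complete s i false.
by move: A1 A2; case: (s i) => /=; lia.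
Qed.


Lemma ordvE n (x : 'I_n) : val x = nat_of_ord x.
Proof. by []. Qed.

Lemma modS x n : x < n -> x.+1 %% n = (if x.+1 == n then 0 else x.+1).
Proof.
move=> H; case: eqP => [->|/eqP Hne]; first by rewrite modnn.
by rewrite modn_small //; lia.
Qed.

Lemma cyc_adj n (i x : 'I_n) : cycle_graph n i x ->
  (nat_of_ord x = i.+1 /\ i.+1 < n) \/ (i.+1 = n /\ nat_of_ord x = 0) \/ (nat_of_ord i = x.+1 /\ x.+1 < n) \/ (x.+1 = n /\ nat_of_ord i = 0).
Proof.
rewrite /cycle_graph (modS (ltn_ord i)) (modS (ltn_ord x)).
have := ltn_ord i; have := ltn_ord x; move=> Hx0 Hi0.
case: (i.+1 =P n) => Hi; case: (x.+1 =P n) => Hx /=; case/orP => /eqP H; lia.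
Qed.

Lemma cyc_irr n (i : 'I_n) : 2 < n -> ~~ cycle_graph n i i.
Proof. move=> Hn; apply/negP => /cyc_adj; lia. Qed.

Definition sc n (j : 'I_n) : bool := odd j.

Lemma mid_unstable n (k : 'I_n) : 3 < n -> 0 < k -> k.+2 <= n ->
  ~ BR (cycle_graph n) (@sc n) k (sc k).
Proof.
move=> Hn Hk1 Hk2; rewrite BR_cnt ?cyc_irr //; last by lia.
have -> : cnt (cycle_graph n) (@sc n) k (sc k) = 0.
  apply/eqP; rewrite cards_eq0; apply/eqP/setP => x; rewrite !inE.
  apply/negP => /andP[/cyc_adj H]; rewrite /sc.
  have [->|->] : nat_of_ord x = k.+1 \/ nat_of_ord k = x.+1 by lia.
    by rewrite oddS; case: (odd k).
  by rewrite oddS; case: (odd x).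
apply/negP; rewrite -ltnNge; apply/card_gt0P.
have Hlt : k.+1 < n by lia.
exists (Ordinal Hlt); rewrite !inE /cycle_graph /= modn_small // eqxx /= /sc /=.
by case: (odd k).
Qed.

Lemma cyc_deg n (i : 'I_n) : #|[set x | cycle_graph n i x]| <= 2.
Proof.
have -> : [set x | cycle_graph n i x] = [set x : 'I_n | val x == i.+1 %% n] :|: [set x : 'I_n | val i == x.+1 %% n].
  by apply/setP => x; rewrite !inE.
apply: (leq_trans (leq_card_setU _ _)).
have H1 : #|[set x : 'I_n | val x == i.+1 %% n]| <= 1.
  apply/card_le1_eqP => x y; rewrite !inE => /eqP Hx /eqP Hy; by apply: val_inj; rewrite /= Hx Hy.
have H2 : #|[set x : 'I_n | val i == x.+1 %% n]| <= 1.
  apply/card_le1_eqP => x y; rewrite !inE (modS (ltn_ord x)) (modS (ltn_ord y)).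
  move=> /eqP Hx /eqP Hy; apply: val_inj => /=; move: Hx Hy.
  case: eqP => Hx; case: eqP => Hy; lia.
lia.
Qed.

Lemma cyc_pair n (i : 'I_n) : 3 < n ->
  exists j, j != i /\ ~ BR (cycle_graph n) (@sc n) j (sc j) /\
      exists shat : bool, BR (cycle_graph n) (@sc n) j shat /\ BR (cycle_graph n) (upd (@sc n) j shat) i (sc i).
Proof.
move=> Hn; have Hi := ltn_ord i.
have [j [Hj1 [Hj2 Hj3]]] : exists j : 'I_n, [/\ 0 < j, j.+2 <= n & (nat_of_ord j = i.+1 \/ nat_of_ord i = j.+1)].
  case: (ltnP i.+2 n) => H.
    have Hlt : i.+1 < n by lia.
    by exists (Ordinal Hlt); split => /=; [lia|lia|left].
  have Hlt : i.-1 < n by lia.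
  by exists (Ordinal Hlt); split => /=; [lia|lia|right; lia].
apply: (pair_ok (j := j)); rewrite ?cyc_irr //; try lia.
- rewrite /cycle_graph (modS (ltn_ord i)) (modS (ltn_ord j)).
  by case: (i.+1 =P n) => ?; case: (j.+1 =P n) => ? /=; lia.
- by rewrite /sc; case: Hj3 => ->; rewrite oddS; [case: (odd i) | case: (odd j)].
- exact: (mid_unstable Hn Hj1 Hj2).
- have := cnt_le_deg (cycle_graph n) (@sc n) i (~~ sc i); have := cyc_deg i; lia.
Qed.

Lemma cyc_util0 n (i : 'I_n) : 3 < n -> ~~ odd n -> util (cycle_graph n) (@sc n) i = 0.
Proof.
move=> Hn Hev; apply/eqP; rewrite cards_eq0; apply/eqP/setP => x; rewrite !inE.
apply/negP => /andP[/cyc_adj H]; rewrite /sc.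
case: H => [[-> _]|[[H1 ->]|[[-> _]|[H1 ->]]]].
- by rewrite oddS; case: (odd i).
- by have Ho := oddS i; rewrite H1 in Ho; move: Hev; rewrite Ho negbK => ->.
- by rewrite oddS; case: (odd x).
- by have Ho := oddS x; rewrite H1 in Ho; move: Hev; rewrite Ho negbK => ->.
Qed.

Definition nxt n (Hn : 0 < n) (i : 'I_n) : 'I_n := Ordinal (ltn_pmod i.+1 Hn).

Lemma cyc_edges n : 3 < n -> #|[set p : 'I_n * 'I_n | cycle_graph n p.1 p.2]| = n * 2.
Proof.
move=> Hn; have Hn0 : 0 < n by lia.
pose f := fun p : 'I_n * bool => if p.2 then (p.1, nxt Hn0 p.1) else (nxt Hn0 p.1, p.1).
have -> : [set p : 'I_n * 'I_n | cycle_graph n p.1 p.2] = f @: setT.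
  apply/setP => -[a b]; rewrite inE /=; apply/idP/imsetP.
    rewrite /cycle_graph; case/orP => /eqP H.
      by exists (a, true) => //; rewrite /f /=; congr (_, _); apply: val_inj.
    by exists (b, false) => //; rewrite /f /=; congr (_, _); apply: val_inj.
  case=> -[x c] _; rewrite /f /=; case: c => -[-> ->]; rewrite /cycle_graph /= eqxx //.
  by rewrite orbT.
rewrite card_imset ?cardsT ?card_prod ?card_ord ?card_bool //.
move=> [x c] [y d]; rewrite /f /=.
have Hx := ltn_ord x; have Hy := ltn_ord y.
case: c; case: d => /= -[].
- by move=> -> _.
- move=> /(congr1 val) /= H1 /(congr1 val) /= H2; exfalso; move: H1 H2.
  rewrite (modS Hx) (modS Hy); case: (x.+1 =P n) => ?; case: (y.+1 =P n) => ? ; lia.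
- move=> /(congr1 val) /= H1 /(congr1 val) /= H2; exfalso; move: H1 H2.
  rewrite (modS Hx) (modS Hy); case: (x.+1 =P n) => ?; case: (y.+1 =P n) => ? ; lia.
- by move=> _ ->.
Qed.

Lemma part1 n : 4 <= n ->
     (exists s : 'I_n -> bool,
        stable_transition (cycle_graph n) (NE (cycle_graph n)) s /\ ~ NE (cycle_graph n) s) /\
     (~~ odd n ->
       exists s : 'I_n -> bool,
        [/\ stable_transition (cycle_graph n) (NE (cycle_graph n)) s, ~ NE (cycle_graph n) s &
            ((sw (cycle_graph n) s)%:Z = (nedges (cycle_graph n))%:Z - (#|'I_n|)%:Z)%R]).
Proof.
move=> Hn.
have Hst : stable_transition (cycle_graph n) (NE (cycle_graph n)) (@sc n).
  by split; [exact: transition_NE | move=> i _; exact: cyc_pair].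
have H1 : 1 < n by lia.
have HnNE : ~ NE (cycle_graph n) (@sc n).
  move=> H; apply: (@mid_unstable n (Ordinal H1)) => /=; try lia; exact: H.
split; first by exists (@sc n).
move=> Hev; exists (@sc n); split => //.
have -> : sw (cycle_graph n) (@sc n) = 0.
  by rewrite /sw big1 // => i _; apply: cyc_util0.
rewrite /nedges cyc_edges // mulnK // card_ord.
by rewrite GRing.subrr.
Qed.


Section Forest.
Variables (T : finType) (e : rel T).
Hypothesis Hf : forest e.

Let Hsym : symmetric e. Proof. by case: Hf => -[]. Qed.
Let Hirr : irreflexive e. Proof. by case: Hf => -[]. Qed.
Let Hacy : forall p : seq T, uniq p -> 3 <= size p -> ~~ cycle e p.
Proof. by case: Hf. Qed.

Lemma leaf_case x a r : uniq (x :: a :: r) -> path e x (a :: r) ->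
  (forall y, e x y -> y \in x :: a :: r) -> forall j, e x j -> j = a.
Proof.
move=> Hu Hp Hall j Hj; apply/eqP; apply: contraT => Hja; exfalso.
have := Hall j Hj; rewrite !inE (negbTE Hja) /=.
have -> : (j == x) = false by apply/eqP => E; move: Hj; rewrite E Hirr.
move=> /= Hjr; case/splitPr: Hjr Hu Hp => r1 r2 Hu Hp.
have Hu' : uniq (x :: a :: rcons r1 j).
  have : uniq ((x :: a :: rcons r1 j) ++ r2) by rewrite /= cat_rcons.
  by rewrite cat_uniq => /andP[].
have Hs : 2 < size (x :: a :: rcons r1 j) by rewrite /= size_rcons.
move: (Hacy Hu' Hs) => /negP; apply.
move: Hp; rewrite /= cat_path /= => /andP[Hxa /and3P[Hr1 Hlj _]].
by rewrite rcons_path /= Hxa rcons_path Hr1 Hlj /= last_rcons Hsym.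
Qed.

Lemma leaf_aux k x p : #|T| - size (x :: p) <= k -> uniq (x :: p) -> path e x p -> p != [::] ->
  exists u v, e u v /\ forall j, e u j -> j = v.
Proof.
elim: k x p => [|k IH] x p Hk Hu Hp Hne.
all: case: (boolP [exists y, e x y && (y \notin x :: p)]).
- case/existsP => y /andP[Hxy Hy]; exfalso.
  have : size (y :: x :: p) <= #|T|.
    by rewrite -(card_uniqP _) ?max_card //= Hy.
  by move: Hk => /=; lia.
- move=> Hn; case: p Hk Hne Hu Hp Hn => // a r Hk _ Hu Hp Hn.
  exists x, a; split; first by case/andP: Hp.
  apply: (leaf_case Hu Hp) => y Hy; apply: contraT => Hy'; case/existsP: Hn.
  by exists y; rewrite Hy.
- case/existsP => y /andP[Hxy Hy].
  apply: (IH y (x :: p)) => //.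
  + have : size (y :: x :: p) <= #|T|.
      by rewrite -(card_uniqP _) ?max_card //= Hy.
    by move: Hk => /=; lia.
  + by rewrite /= Hy.
  + by rewrite /= Hsym Hxy.
- move=> Hn; case: p Hk Hne Hu Hp Hn => // a r Hk _ Hu Hp Hn.
  exists x, a; split; first by case/andP: Hp.
  apply: (leaf_case Hu Hp) => y Hy; apply: contraT => Hy'; case/existsP: Hn.
  by exists y; rewrite Hy.
Qed.

Lemma leaf_exists : (exists a b, e a b) -> exists u v, e u v /\ forall j, e u j -> j = v.
Proof.
case=> a [b Hab].
have Hu : uniq [:: a; b].
  by rewrite /= inE andbT; apply/eqP => E; move: Hab; rewrite E Hirr.
apply: (@leaf_aux #|T| a [:: b] (leq_subr _ _) Hu) => //.
by rewrite /= Hab.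
Qed.

Definition ep (v : T) : rel T := fun x y => [&& e x y, x != v & y != v].

Lemma ep_sym v : symmetric (ep v).
Proof. by move=> x y; rewrite /ep Hsym; case: (e y x); case: (x != v); case: (y != v). Qed.

Lemma path_ep_notv v x q : path (ep v) x q -> v \notin q.
Proof.
elim: q x => //= z q IH x /andP[/and3P[_ _ Hz] Hp].
by rewrite inE negb_or eq_sym Hz (IH z Hp).
Qed.

Lemma noconn v w1 w2 : e v w1 -> e v w2 -> w1 != w2 -> ~~ connect (ep v) w1 w2.
Proof.
move=> H1 H2 Hne; apply/negP => /connectP [p Hp Hl].
case: (shortenP Hp) Hl => q Hq Huq _ Hl.
have Hw1 : w1 != v by apply/eqP => E; move: H1; rewrite E Hirr.
have Hqv := path_ep_notv Hq.
have Hq0 : q != [::] by apply: contraNneq Hne => Eq; rewrite Hl Eq /=.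
have Hu : uniq (v :: w1 :: q) by rewrite /= inE negb_or eq_sym Hw1 Hqv.
have Hs : 2 < size (v :: w1 :: q) by case: q Hq0 {Hq Huq Hqv Hl Hu}.
move: (Hacy Hu Hs) => /negP; apply.
rewrite /= rcons_path H1 /= -Hl Hsym H2 andbT.
by apply: sub_path Hq => x y /andP[].
Qed.

Definition sF v (W : {set T}) y := (y != v) && [exists w in W, connect (ep v) w y].

Lemma sF_side v W y z : y != v -> z != v -> e y z -> sF v W z = sF v W y.
Proof.
move=> Hy Hz Hyz; rewrite /sF Hy Hz /=; apply: eq_existsb => w.
have Hc : connect (ep v) y z by apply: connect1; rewrite /ep Hyz Hy Hz.
have Hc' : connect (ep v) z y by rewrite (sym_connect_sym (@ep_sym v)).
case: (w \in W) => //=; apply/idP/idP => H.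
  exact: connect_trans H Hc'.
exact: connect_trans H Hc.
Qed.

Lemma sF_nb v (W : {set T}) w : W \subset [set x | e v x] -> e v w -> sF v W w = (w \in W).
Proof.
move=> HW Hw; have Hwv : w != v by apply/eqP => E; move: Hw; rewrite E Hirr.
rewrite /sF Hwv /=; apply/idP/idP.
  case/existsP => w' /andP[Hw' Hc]; apply: contraLR Hc => HwW.
  have Hvw' : e v w' by move/subsetP: HW => /(_ w' Hw'); rewrite inE.
  apply: noconn => //; apply: contraNneq HwW => <-; exact: Hw'.
by move=> HwW; apply/existsP; exists w; rewrite HwW connect0.
Qed.

Lemma cnt_split s i : cnt e s i true + cnt e s i false = #|[set x | e i x]|.
Proof.
rewrite -(cardsID [set x | s x] [set x | e i x]); congr (_ + _); apply: eq_card => x;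
  rewrite !inE; by case: (s x); rewrite ?andbT ?andbF.
Qed.

Lemma cnt0 s i b : (forall x, e i x -> s x != b) -> cnt e s i b = 0.
Proof.
move=> H; apply/eqP; rewrite cards_eq0; apply/eqP/setP => x; rewrite !inE.
by apply/negP => /andP[/H Hx /eqP Hb]; rewrite Hb eqxx in Hx.
Qed.

Lemma part3 : (exists i j, e i j) -> exists s, stable_transition e (NE e) s /\ ~ NE e s.
Proof.
move=> Hedge; have [u [v [Huv Hleaf]]] := leaf_exists Hedge.
pose N := [set x | e v x].
have HuN : u \in N by rewrite inE Hsym.
have HNu := cardsD1 u N; rewrite HuN in HNu.
have Hodd := odd_double_half #|N|; rewrite -muln2 in Hodd.
have Hh : #|N|./2 <= #|N :\ u| by lia.
have [B [HBN HB]] := exists_sub Hh.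
pose W := u |: B.
have HuB : u \notin B by apply/negP => /(subsetP HBN); rewrite !inE eqxx.
have HW : W \subset N.
  rewrite subUset sub1set HuN; apply: subset_trans HBN _; exact: subsetDl.
have HWc : #|W| = #|N|./2 + 1 by rewrite cardsU1 HuB HB addnC.
pose s := sF v W.
have Hsv : s v = false by rewrite /s /sF eqxx.
have Hsn : forall w, e v w -> s w = (w \in W) := fun w => sF_nb HW.
have Hsu : s u = true by rewrite Hsn ?setU11 // Hsym.
have Hcvt : cnt e s v true = #|W|.
  apply: eq_card => x; rewrite [x \in [set _ | _]]inE; apply/idP/idP.
    by case/andP => Hx; rewrite (Hsn x Hx) eqb_id.
  move=> Hx; have Hvx : e v x by move/subsetP: HW => /(_ x Hx); rewrite inE.
  by rewrite Hvx (Hsn x Hvx) Hx.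
have Hcvf := cnt_split s v; rewrite -/N Hcvt in Hcvf.
have Hvun : ~ BR e s v (s v) by rewrite BR_cnt ?Hirr // Hsv /=; lia.
exists s; split; last by move/(_ v).
split; first exact: transition_NE.
move=> i Hi; case: (i =P v) => [->|/eqP Hiv].
  apply: (pair_ok (j := u)); rewrite ?Hirr ?Hsv ?Hsu //=; last by lia.
  - by rewrite Hsym.
  have Hut : cnt e s u true = 0.
    by apply: cnt0 => x /Hleaf ->; rewrite Hsv.
  have Huf := cnt_split s u.
  have Eu : [set x | e u x] = [set v] by apply/setP => x; rewrite !inE; apply/idP/eqP => [/Hleaf //|->].
  rewrite Eu cards1 in Huf; rewrite BR_cnt ?Hirr // /=; lia.
have Hside : forall z, e i z -> z != v -> s z = s i.
  by move=> z Hz Hzv; rewrite /s (sF_side W Hiv Hzv Hz).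
case: (boolP (e i v)) => Hev; last first.
  exfalso; apply: Hi; rewrite BR_cnt ?Hirr // cnt0 // => x Hx.
  have Hxv : x != v by apply: contraNneq Hev => <-.
  by rewrite Hside //; case: (s i).
have Hsi : s i = true.
  case Esi: (s i) => //; exfalso; apply: Hi; rewrite BR_cnt ?Hirr // Esi cnt0 // => x Hx.
  case: (x =P v) => [->|/eqP Hxv]; first by rewrite Hsv.
  by rewrite Hside // Esi.
apply: (pair_ok (j := v)); rewrite ?Hirr ?Hsv ?Hsi //=.
  by move: Hvun; rewrite Hsv.
have : cnt e s i false <= 1.
  rewrite -(cards1 v); apply: subset_leq_card; apply/subsetP => x; rewrite !inE.
  case/andP => Hx /eqP Hsx; case: (x =P v) => // /eqP Hxv; move: Hsx; rewrite Hside // Hsi.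
all: lia.
Qed.

End Forest.

Theorem theorem5 :
  (* (1) cycles on n >= 4 nodes *)
  (forall n : nat, 4 <= n ->
     (exists s : 'I_n -> bool,
        stable_transition (cycle_graph n) (NE (cycle_graph n)) s /\ ~ NE (cycle_graph n) s) /\
     (~~ odd n ->
       exists s : 'I_n -> bool,
        [/\ stable_transition (cycle_graph n) (NE (cycle_graph n)) s, ~ NE (cycle_graph n) s &
            ((sw (cycle_graph n) s)%:Z = (nedges (cycle_graph n))%:Z - (#|'I_n|)%:Z)%R])) /\
  (* (2) complete graphs on n >= 1 nodes *)
  (forall n : nat, 0 < n ->
     ((exists s : 'I_n -> bool,
        stable_transition (complete_graph n) (NE (complete_graph n)) s /\ ~ NE (complete_graph n) s)
      <-> ~~ odd n)) /\
  (* (3) forests with at least one edge *)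
  (forall (T : finType) (e : rel T), forest e -> (exists i j, e i j) ->
     exists s : T -> bool, stable_transition e (NE e) s /\ ~ NE e s).
Proof.
split; first exact: part1.
split; first exact: part2.
move=> T e Hf He; exact: (part3 Hf He).
Qed.
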